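(* Let $x_1,\dots,x_N \in [-1,1]^d$ with labels $y_1,\dots,y_N \in \{-1,1\}$, let $\lambda > 0$, and let $F(\beta) = \frac{1}{N}\sum_{i=1}^N \max(0, 1 - y_i \beta\cdot x_i) + \lambda\|\beta\|_2^2$, with $\beta^* = \arg\min_{\beta\in\mathbb{R}^d} F(\beta)$. Let $\mathcal K$ be the ball of radius $\frac{\sqrt d}{2\lambda}$ centered at the origin. Starting from $\beta^{(0)} = 0$, perform projected gradient descent $\beta^{(t)} = \Pi_{\mathcal K}(\beta^{(t-1)} - \eta_t \nabla F(\beta^{(t-1)}))$ with $\eta_t = \frac{1}{8\lambda\sqrt{dt}}$, and let $\widehat\beta_s = \frac{1}{s}\sum_{t=0}^{s-1}\beta^{(t)}$. Then after $T-1$ iterations, $$F(\widehat\beta_T) - F(\beta^* ) \le \frac{4 d^{3/2}}{\lambda\sqrt T}.$$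
   Context: $\Pi_{\mathcal K}(\alpha) = \arg\min_{\beta\in\mathcal K}\|\alpha-\beta\|_2$. The gradient used is $\nabla F(\beta) = 2\lambda\beta - \frac{1}{N}\sum_{i:\ y_i\beta\cdot x_i \le 1} y_i x_i$ (the subgradient that counts points lying exactly on the hinge). *)

(* Defs.v *)
From HB Require Import structures.
From mathcomp Require Import all_boot all_order all_algebra.
From mathcomp Require Import reals.
Set Implicit Arguments. Unset Strict Implicit. Unset Printing Implicit Defensive.
Import Order.TTheory GRing.Theory Num.Theory.
Local Open Scope ring_scope.

Section SVM.
Variables (R : realType) (d N : nat).

Definition dotp (u v : 'rV[R]_d) : R := \sum_(j < d) u 0 j * v 0 j.
Definition norm2 (u : 'rV[R]_d) : R := Num.sqrt (dotp u u).

Variables (x : 'I_N -> 'rV[R]_d) (y : 'I_N -> R) (lam : R).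

Definition svmF (b : 'rV[R]_d) : R :=
  N%:R^-1 * (\sum_(i < N) Num.max 0 (1 - y i * dotp b (x i)))
  + lam * (norm2 b) ^+ 2.

Definition svm_grad (b : 'rV[R]_d) : 'rV[R]_d :=
  (2 * lam) *: b - N%:R^-1 *: (\sum_(i < N | y i * dotp b (x i) <= 1) (y i *: x i)).

Definition svm_eta (t : nat) : R := (8 * lam * Num.sqrt (d%:R * t%:R))^-1.

Fixpoint pgd_iter (proj : 'rV[R]_d -> 'rV[R]_d) (t : nat) : 'rV[R]_d :=
  match t with
  | 0 => 0
  | t'.+1 => let b := pgd_iter proj t' in
             proj (b - svm_eta t'.+1 *: svm_grad b)
  end.

Definition pgd_avg (proj : 'rV[R]_d -> 'rV[R]_d) (s : nat) : 'rV[R]_d :=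
  s%:R^-1 *: \sum_(t < s) pgd_iter proj t.

End SVM.

Definition in_ball (R : realType) (d : nat) (r : R) (b : 'rV[R]_d) : Prop :=
  norm2 b <= r.

Definition is_ball_projection (R : realType) (d : nat) (r : R)
  (proj : 'rV[R]_d -> 'rV[R]_d) : Prop :=
  forall a, in_ball r (proj a) /\
    (forall b, in_ball r b -> norm2 (a - proj a) <= norm2 (a - b)).

(* Main.v *)
Require Import Defs.
From HB Require Import structures.
From mathcomp Require Import all_boot all_order all_algebra.
From mathcomp Require Import reals.
From mathcomp Require Import ring lra.
Import Order.TTheory GRing.Theory Num.Theory.
Local Open Scope ring_scope.

Lemma dotpC {R : realType} {d : nat} (u v : 'rV[R]_d) : dotp u v = dotp v u.
Proof. by rewrite /dotp; apply: eq_bigr => j _; rewrite mulrC. Qed.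

Lemma dotpDl {R : realType} {d : nat} (u v w : 'rV[R]_d) : dotp (u + v) w = dotp u w + dotp v w.
Proof. by rewrite /dotp -big_split; apply: eq_bigr => j _; rewrite mxE mulrDl. Qed.

Lemma dotpZl {R : realType} {d : nat} k (u w : 'rV[R]_d) : dotp (k *: u) w = k * dotp u w.
Proof. by rewrite /dotp mulr_sumr; apply: eq_bigr => j _; rewrite mxE mulrA. Qed.

Lemma dotpNl {R : realType} {d : nat} (u w : 'rV[R]_d) : dotp (- u) w = - dotp u w.
Proof. by rewrite -scaleN1r dotpZl mulN1r. Qed.

Lemma dotpBl {R : realType} {d : nat} (u v w : 'rV[R]_d) : dotp (u - v) w = dotp u w - dotp v w.
Proof. by rewrite dotpDl dotpNl. Qed.

Lemma dotp0l {R : realType} {d : nat} (w : 'rV[R]_d) : dotp 0 w = 0.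
Proof. by rewrite /dotp big1 // => j _; rewrite mxE mul0r. Qed.

Lemma dotpDr {R : realType} {d : nat} (u v w : 'rV[R]_d) : dotp w (u + v) = dotp w u + dotp w v.
Proof. by rewrite dotpC dotpDl !(dotpC w). Qed.
Lemma dotpZr {R : realType} {d : nat} k (u w : 'rV[R]_d) : dotp w (k *: u) = k * dotp w u.
Proof. by rewrite dotpC dotpZl dotpC. Qed.
Lemma dotpBr {R : realType} {d : nat} (u v w : 'rV[R]_d) : dotp w (u - v) = dotp w u - dotp w v.
Proof. by rewrite dotpC dotpBl !(dotpC w). Qed.
Lemma dotp0r {R : realType} {d : nat} (w : 'rV[R]_d) : dotp w 0 = 0.
Proof. by rewrite dotpC dotp0l. Qed.

Lemma dotp_suml {R : realType} {d : nat} (I : finType) (P : pred I) (F : I -> 'rV[R]_d) w :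
  dotp (\sum_(i | P i) F i) w = \sum_(i | P i) dotp (F i) w.
Proof.
exact: (big_morph (fun u => dotp u w) (fun a b => dotpDl a b w) (dotp0l w)).
Qed.

Lemma dotp_ge0 {R : realType} {d : nat} (u : 'rV[R]_d) : 0 <= dotp u u.
Proof. by rewrite /dotp sumr_ge0 // => j _; rewrite -expr2 sqr_ge0. Qed.

Lemma norm2_sq {R : realType} {d : nat} (u : 'rV[R]_d) : norm2 u ^+ 2 = dotp u u.
Proof. by rewrite /norm2 sqr_sqrtr ?dotp_ge0. Qed.

Lemma dotp_eq0 {R : realType} {d : nat} (u v : 'rV[R]_d) : dotp u u = 0 -> dotp u v = 0.
Proof.
move=> /eqP; rewrite /dotp psumr_eq0 => [/allP H|j _]; last by rewrite -expr2 sqr_ge0.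
rewrite big1 // => j _.
have /implyP := H j (mem_index_enum _); rewrite -expr2 sqrf_eq0 => /(_ isT) /eqP ->.
by rewrite mul0r.
Qed.

Lemma CS {R : realType} {d : nat} (u v : 'rV[R]_d) : dotp u v <= norm2 u * norm2 v.
Proof.
set a := norm2 u; set b := norm2 v.
have a0 : 0 <= a by exact: sqrtr_ge0.
have b0 : 0 <= b by exact: sqrtr_ge0.
have ha : a ^+ 2 = dotp u u by exact: norm2_sq.
have hb : b ^+ 2 = dotp v v by exact: norm2_sq.
have := dotp_ge0 (b *: u - a *: v).
rewrite !(dotpBl, dotpBr, dotpZl, dotpZr) -ha -hb (dotpC v u) => H.
have [ab0|abp] := eqVneq (a * b) 0.
  move/eqP: ab0; rewrite mulf_eq0 => /orP [] /eqP h.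
    by rewrite dotp_eq0 ?h ?mul0r // -ha h expr0n.
  by rewrite dotpC dotp_eq0 ?h ?mulr0 // -hb h expr0n.
have abp' : 0 < a * b by rewrite lt_def abp mulr_ge0.
rewrite -subr_ge0.
have : 0 <= (a * b) * (a * b - dotp u v) by nra.
by rewrite pmulr_rge0.
Qed.

Lemma hinge_sub {R : realType} {d : nat} (xi c e : 'rV[R]_d) (yi : R) :
  Num.max 0 (1 - yi * dotp c xi) -
  (if yi * dotp c xi <= 1 then yi * dotp e xi else 0)
  <= Num.max 0 (1 - yi * (dotp c xi + dotp e xi)).
Proof.
case: ifP => h.
  have -> : Num.max 0 (1 - yi * dotp c xi) = 1 - yi * dotp c xi.
    by apply/max_idPr; rewrite subr_ge0.
  rewrite le_max; apply/orP; right; lra.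
have -> : Num.max 0 (1 - yi * dotp c xi) = 0.
  by apply/max_idPl; rewrite subr_le0 ltW // ltNge h.
by rewrite subr0 le_max lexx.
Qed.

Lemma subgrad' {R : realType} {d N : nat} (x : 'I_N -> 'rV[R]_d) (y : 'I_N -> R)
  (lam : R) (c e : 'rV[R]_d) :
  svmF x y lam c + dotp (svm_grad x y lam c) e + lam * dotp e e
  <= svmF x y lam (c + e).
Proof.
rewrite /svmF /svm_grad !norm2_sq.
rewrite !(dotpBl, dotpZl, dotp_suml) !(dotpDl, dotpDr).
have H : \sum_(i < N) Num.max 0 (1 - y i * dotp c (x i)) -
   \sum_(i < N | y i * dotp c (x i) <= 1) (y i * dotp (x i) e) <=
   \sum_(i < N) Num.max 0 (1 - y i * (dotp c (x i) + dotp e (x i))).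
  rewrite [X in _ - X]big_mkcond /= -sumrB; apply: ler_sum => i _.
  by rewrite (dotpC (x i)); apply: hinge_sub.
have Ni : 0 <= N%:R^-1 :> R by rewrite invr_ge0 ler0n.
have := ler_wpM2l Ni H.
have E1 : \sum_(i < N | y i * dotp c (x i) <= 1) dotp (y i *: x i) e =
  \sum_(i < N | y i * dotp c (x i) <= 1) y i * dotp (x i) e.
  by apply: eq_bigr => i _; rewrite dotpZl.
have E2 : \sum_(i < N) Num.max 0 (1 - y i * dotp (c + e) (x i)) =
  \sum_(i < N) Num.max 0 (1 - y i * (dotp c (x i) + dotp e (x i))).
  by apply: eq_bigr => i _; rewrite dotpDl.
rewrite E1 E2 (dotpC e c); lra.
Qed.

Lemma subgrad {R : realType} {d N : nat} (x : 'I_N -> 'rV[R]_d) (y : 'I_N -> R)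
  (lam : R) (b c : 'rV[R]_d) :
  svmF x y lam c + dotp (svm_grad x y lam c) (b - c) + lam * dotp (b - c) (b - c)
  <= svmF x y lam b.
Proof. by have := subgrad' x y lam c (b - c); rewrite (addrC c) subrK. Qed.

Lemma ball_sq {R : realType} {d : nat} (r : R) (b : 'rV[R]_d) :
  0 <= r -> in_ball r b <-> dotp b b <= r ^+ 2.
Proof.
move=> r0; rewrite /in_ball -norm2_sq; have n0 : 0 <= norm2 b by exact: sqrtr_ge0.
split => h; nra.
Qed.

Lemma dotp_subZ {R : realType} {d : nat} (u v : 'rV[R]_d) k :
  dotp (u - k *: v) (u - k *: v) = dotp u u - 2 * k * dotp u v + k ^+ 2 * dotp v v.
Proof. rewrite !(dotpBl, dotpBr, dotpZl, dotpZr) (dotpC v u); ring. Qed.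

Lemma dotp_addZ {R : realType} {d : nat} (u v : 'rV[R]_d) k :
  dotp (u + k *: v) (u + k *: v) = dotp u u + 2 * k * dotp u v + k ^+ 2 * dotp v v.
Proof. rewrite !(dotpDl, dotpDr, dotpZl, dotpZr) (dotpC v u); ring. Qed.

Lemma proj_ineq {R : realType} {d : nat} (r : R) (proj : 'rV[R]_d -> 'rV[R]_d) a z :
  0 <= r -> is_ball_projection r proj -> in_ball r z ->
  dotp (a - proj a) (z - proj a) <= 0.
Proof.
move=> r0 Hp Hz; have [Hpa Hmin] := Hp a.
set p := proj a in Hpa Hmin *.
set u := a - p; set v := z - p.
have key : forall eps, 0 < eps <= 1 -> 2 * dotp u v <= eps * dotp v v.
  move=> eps /andP [e0 e1].
  have Hw : in_ball r (p + eps *: v).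
    apply/ball_sq => //.
    have -> : p + eps *: v = (1 - eps) *: p + eps *: z.
      by apply/rowP => j; rewrite /v !mxE; ring.
    rewrite !(dotpDl, dotpDr, dotpZl, dotpZr) (dotpC z p).
    have hp : dotp p p <= r ^+ 2 by apply/ball_sq.
    have hz : dotp z z <= r ^+ 2 by apply/ball_sq.
    have hpz : dotp p z <= r ^+ 2.
      apply: le_trans (CS p z) _; rewrite expr2.
      apply: ler_pM; rewrite ?sqrtr_ge0 //.
    have h1 : 0 <= (1 - eps) ^+ 2 by rewrite sqr_ge0.
    have h2 : 0 <= eps * (1 - eps) by apply: mulr_ge0; lra.
    have h3 : 0 <= eps ^+ 2 by rewrite sqr_ge0.
    have := ler_wpM2l h1 hp; have := ler_wpM2l h2 hpz; have := ler_wpM2l h3 hz.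
    nra.
  have := Hmin _ Hw.
  rewrite /norm2 ler_sqrt ?dotp_ge0 //.
  have -> : a - (p + eps *: v) = u - eps *: v by rewrite /u opprD addrA.
  rewrite dotp_subZ => h.
  have : 0 <= eps * (eps * dotp v v - 2 * dotp u v) by nra.
  by rewrite pmulr_rge0 // subr_ge0.
rewrite leNgt; apply/negP => c0.
have K0 : 0 <= dotp v v by exact: dotp_ge0.
have hc : 0 < dotp u v + dotp v v by lra.
have := key (dotp u v / (dotp u v + dotp v v)).
rewrite divr_gt0 // ler_pdivrMr // mul1r lerDl K0 => /(_ isT).
rewrite mulrAC ler_pdivlMr //.
nra.
Qed.

Lemma dotpNr {R : realType} {d : nat} (u w : 'rV[R]_d) : dotp w (- u) = - dotp w u.
Proof. by rewrite dotpC dotpNl dotpC. Qed.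

Lemma proj_nonexp {R : realType} {d : nat} (r : R) (proj : 'rV[R]_d -> 'rV[R]_d) a z :
  0 <= r -> is_ball_projection r proj -> in_ball r z ->
  dotp (proj a - z) (proj a - z) <= dotp (a - z) (a - z).
Proof.
move=> r0 Hp Hz; have H := proj_ineq r proj a z r0 Hp Hz.
have -> : a - z = (a - proj a) + (proj a - z) by rewrite addrA subrK.
have E2 : z - proj a = - (proj a - z) by rewrite opprB.
rewrite E2 in H.
move: (a - proj a) (proj a - z) H => u w H.
rewrite dotpNr in H.
rewrite !(dotpDl, dotpDr) (dotpC w u).
have := dotp_ge0 u; lra.
Qed.

Lemma dotp_le_d {R : realType} {d : nat} (u : 'rV[R]_d) :
  (forall j, `|u 0 j| <= 1) -> dotp u u <= d%:R.
Proof.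
move=> H; rewrite /dotp -[d in d%:R]card_ord -sumr_const.
apply: ler_sum => j _; have := H j; rewrite ler_norml => /andP [h1 h2]; nra.
Qed.

Lemma abs_dotp_le {R : realType} {d : nat} (b u : 'rV[R]_d) :
  (forall j, `|u 0 j| <= 1) -> `|dotp b u| <= norm2 b * Num.sqrt d%:R.
Proof.
move=> H.
have hu : norm2 u <= Num.sqrt d%:R by rewrite /norm2 ler_sqrt ?ler0n ?dotp_le_d.
have hb : 0 <= norm2 b by exact: sqrtr_ge0.
have h1 : dotp b u <= norm2 b * Num.sqrt d%:R.
  by apply: le_trans (CS b u) _; apply: ler_wpM2l.
have h2 : - dotp b u <= norm2 b * Num.sqrt d%:R.
  have hn : norm2 (- u) = norm2 u by rewrite /norm2 dotpNl dotpNr opprK.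
  rewrite -dotpNr; apply: le_trans (CS b (- u)) _; rewrite hn; apply: ler_wpM2l => //.
by rewrite ler_norml h1 andbT lerNl.
Qed.

Lemma max_shift {R : realType} (A B M : R) : `|B| <= M ->
  Num.max 0 (A + B) <= Num.max 0 A + M.
Proof.
move=> h; have := h; rewrite ler_norml => /andP [h1 h2].
have m0 : 0 <= Num.max 0 A by rewrite le_max lexx.
have mA : A <= Num.max 0 A by rewrite le_max lexx orbT.
rewrite ge_max; apply/andP; split; lra.
Qed.

Lemma bstar_ball {R : realType} {d N : nat} (x : 'I_N -> 'rV[R]_d) (y : 'I_N -> R)
  (lam : R) (bs : 'rV[R]_d) :
  (0 < N)%N ->
  (forall i j, `|x i 0 j| <= 1) ->
  (forall i, y i = 1 \/ y i = -1) ->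
  0 < lam ->
  (forall b, svmF x y lam bs <= svmF x y lam b) ->
  in_ball (Num.sqrt d%:R / (2 * lam)) bs.
Proof.
move=> N0 Hx Hy l0 Hopt.
rewrite /in_ball; set n := norm2 bs; set s := Num.sqrt d%:R.
have n0 : 0 <= n by exact: sqrtr_ge0.
have s0 : 0 <= s by exact: sqrtr_ge0.
have n2 : n ^+ 2 = dotp bs bs by exact: norm2_sq.
rewrite ler_pdivlMr ?mulr_gt0 //.
rewrite leNgt; apply/negP => hn.
set a := n * (2 * lam) - s.
have a0 : 0 < a by rewrite /a subr_gt0.
have np : 0 < n * (2 * lam) by lra.
set eps := a / (n * (2 * lam)).
have he : eps * (n * (2 * lam)) = a by rewrite /eps mulfVK // gt_eqF.
have e0 : 0 < eps by rewrite divr_gt0.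
have Hsum : \sum_(i < N) Num.max 0 (1 - y i * dotp ((1 - eps) *: bs) (x i)) <=
   \sum_(i < N) Num.max 0 (1 - y i * dotp bs (x i)) + N%:R * (eps * (n * s)).
  set c := eps * (n * s).
  have E : \sum_(i < N) (Num.max 0 (1 - y i * dotp bs (x i)) + c) =
     \sum_(i < N) Num.max 0 (1 - y i * dotp bs (x i)) + N%:R * c.
    by rewrite big_split /= sumr_const card_ord mulr_natl.
  rewrite -E; apply: ler_sum => i _.
  have -> : 1 - y i * dotp ((1 - eps) *: bs) (x i) =
      (1 - y i * dotp bs (x i)) + eps * (y i * dotp bs (x i)).
    rewrite dotpZl; ring.
  apply: max_shift.
  rewrite normrM (gtr0_norm e0) ler_pM2l // normrM.
  have -> : `|y i| = 1 by case: (Hy i) => ->; rewrite ?normrN normr1.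
  by rewrite mul1r abs_dotp_le.
have Ni : 0 <= N%:R^-1 :> R by rewrite invr_ge0 ler0n.
have := ler_wpM2l Ni Hsum.
rewrite mulrDr (mulrA N%:R^-1) mulVf ?pnatr_eq0 -?lt0n // mul1r => H1.
have := Hopt ((1 - eps) *: bs).
rewrite /svmF !norm2_sq dotpZl dotpZr -n2 -/n.
move: H1.
set S1 := N%:R^-1 * _; set S0 := N%:R^-1 * _ => H1 H2.
have key : eps * (n * s) + lam * ((1 - eps) * ((1 - eps) * n ^+ 2)) - lam * n ^+ 2 < 0.
  have -> : eps * (n * s) + lam * ((1 - eps) * ((1 - eps) * n ^+ 2)) - lam * n ^+ 2
     = eps * n * (s + eps * n * lam - 2 * lam * n) by ring.
  have npos : 0 < n by move: np; rewrite pmulr_lgt0 // mulr_gt0.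
  rewrite pmulr_rlt0 ?mulr_gt0 ?invr_gt0 //.
  have : eps * n * lam = a / 2 by rewrite -[a]he; field.
  have ha : a = n * (2 * lam) - s by []. move=> hh; nra.
lra.
Qed.

Lemma dotp_sub_le {R : realType} {d : nat} (u v : 'rV[R]_d) :
  dotp (u - v) (u - v) <= 2 * dotp u u + 2 * dotp v v.
Proof.
have := dotp_ge0 (u + v).
rewrite !(dotpDl, dotpDr) !(dotpNl, dotpNr) opprK (dotpC v u); lra.
Qed.

Lemma grad_bound {R : realType} {d N : nat} (x : 'I_N -> 'rV[R]_d) (y : 'I_N -> R)
  (lam : R) (b : 'rV[R]_d) :
  (0 < N)%N ->
  (forall i j, `|x i 0 j| <= 1) ->
  (forall i, y i = 1 \/ y i = -1) ->
  0 < lam ->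
  in_ball (Num.sqrt d%:R / (2 * lam)) b ->
  dotp (svm_grad x y lam b) (svm_grad x y lam b) <= 4 * d%:R.
Proof.
move=> N0 Hx Hy l0 Hb.
have r0 : 0 <= Num.sqrt d%:R / (2 * lam) by rewrite divr_ge0 ?sqrtr_ge0 // ltW // mulr_gt0.
have := ball_sq (Num.sqrt d%:R / (2 * lam)) b r0; case=> Hb1 _; have {Hb1}Hb := Hb1 Hb.
rewrite /svm_grad; apply: le_trans (dotp_sub_le _ _) _.
have h1 : dotp ((2 * lam) *: b) ((2 * lam) *: b) <= d%:R.
  rewrite dotpZl dotpZr.
  have : (Num.sqrt d%:R / (2 * lam)) ^+ 2 = d%:R / (2 * lam) ^+ 2.
    by rewrite expr_div_n sqr_sqrtr ?ler0n.
  move=> e; rewrite e in Hb.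
  have l2 : 0 < (2 * lam) ^+ 2 by rewrite exprn_gt0 // mulr_gt0.
  rewrite mulrA -expr2; move: Hb; rewrite ler_pdivlMr //.
  by rewrite mulrC.
have h2 : dotp (N%:R^-1 *: \sum_(i < N | y i * dotp b (x i) <= 1) y i *: x i)
               (N%:R^-1 *: \sum_(i < N | y i * dotp b (x i) <= 1) y i *: x i) <= d%:R.
  apply: dotp_le_d => j.
  rewrite mxE summxE normrM.
  have Ni : 0 < N%:R^-1 :> R by rewrite invr_gt0 ltr0n.
  rewrite (gtr0_norm Ni) ler_pdivrMl ?ltr0n // mulr1.
  apply: le_trans (ler_norm_sum _ _ _) _.
  rewrite big_mkcond /=.
  have -> : N%:R = \sum_(i < N) (1 : R) by rewrite sumr_const card_ord.
  apply: ler_sum => i _; case: ifP => _; last by [].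
  rewrite mxE normrM.
  have -> : `|y i| = 1 by case: (Hy i) => ->; rewrite ?normrN normr1.
  by rewrite mul1r.
lra.
Qed.

Lemma potential {R : realType} (e D c q : nat -> R) (K lam : R) :
  (forall t, e t <= c t.+1 * (D t - D t.+1) - lam * D t + q t.+1) ->
  (forall t, 0 <= D t <= K) -> 4 * D 0 <= K -> 0 <= lam ->
  4 * q 1%N <= 3 * K * c 1%N -> 0 <= c 1%N ->
  (forall n, (0 < n)%N -> q n.+1 <= K * lam /\ q n.+1 <= K * (c n.+1 - c n)) ->
  forall n, \sum_(t < n.+1) e t + c n.+1 * D n.+1 <= K * c n.+1.
Proof.
move=> He HD HD0 l0 Hq1 c1 Hq.
elim=> [|n IH].
  rewrite big_ord_recr big_ord0 /= add0r.
  have := He 0%N; have := HD 0%N; have := HD 1%N.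
  move=> /andP [a1 a2] /andP [b1 b2] h.
  have : c 1%N * D 0%N <= c 1%N * (K / 4) by apply: ler_wpM2l => //; lra.
  have : 0 <= lam * D 0%N by apply: mulr_ge0.
  lra.
rewrite big_ord_recr /=.
have [hq1 hq2] := Hq n.+1 isT.
have := He n.+1; have := HD n.+1 => /andP [a1 a2] h.
have [hneg|hpos] := lerP (c n.+2 - c n.+1 - lam) 0.
  have : D n.+1 * (c n.+2 - c n.+1 - lam) <= 0 by rewrite mulr_ge0_le0.
  nra.
have : D n.+1 * (c n.+2 - c n.+1 - lam) <= K * (c n.+2 - c n.+1 - lam).
  by apply: ler_wpM2r => //; apply: ltW.
nra.
Qed.

Lemma eta_form {R : realType} (d : nat) (lam : R) t : (0 < t)%N ->
  svm_eta d lam t = (8 * lam * (Num.sqrt d%:R * Num.sqrt t%:R))^-1.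
Proof. by move=> _; rewrite /svm_eta sqrtrM ?ler0n. Qed.

Lemma num_c {R : realType} (lam s u : R) : 0 < lam -> 0 < s -> 0 < u ->
  (2 * (8 * lam * (s * u))^-1)^-1 = 4 * lam * s * u.
Proof. move=> l0 s0 u0; field; apply/and3P; split; apply/negP; lra. Qed.

Lemma num_q {R : realType} (lam s u : R) : 0 < lam -> 0 < s -> 0 < u ->
  2 * s ^+ 2 * (8 * lam * (s * u))^-1 = s / (4 * lam * u).
Proof. move=> l0 s0 u0; field; apply/and3P; split; apply/negP; lra. Qed.

Lemma num_K {R : realType} (lam s : R) : 0 < lam ->
  4 * (s / (2 * lam)) ^+ 2 = s ^+ 2 / lam ^+ 2.
Proof. move=> l0; field; apply/negP; lra. Qed.

Lemma num1 {R : realType} (lam s : R) : 0 < lam -> 1 <= s ->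
  4 * (s / (4 * lam * 1)) <= 3 * (s ^+ 2 / lam ^+ 2) * (4 * lam * s * 1).
Proof.
move=> l0 s1.
have -> : 4 * (s / (4 * lam * 1)) = s / lam by field; apply/negP; lra.
have -> : 3 * (s ^+ 2 / lam ^+ 2) * (4 * lam * s * 1) = 12 * s ^+ 3 / lam.
  by field; apply/negP; lra.
rewrite ler_pM2r ?invr_gt0 //; nra.
Qed.

Lemma num2 {R : realType} (lam s u : R) : 0 < lam -> 1 <= s -> 1 <= u ->
  s / (4 * lam * u) <= s ^+ 2 / lam ^+ 2 * lam.
Proof.
move=> l0 s1 u1.
have -> : s ^+ 2 / lam ^+ 2 * lam = s ^+ 2 / lam by field; apply/negP; lra.
rewrite ler_pdivrMr ?mulr_gt0 //; try lra.
have -> : s ^+ 2 / lam * (4 * lam * u) = 4 * s ^+ 2 * u by field; apply/negP; lra.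
nra.
Qed.

Lemma num3 {R : realType} (lam s u u' : R) : 0 < lam -> 1 <= s -> 0 <= u -> 1 <= u' ->
  u' ^+ 2 = u ^+ 2 + 1 ->
  s / (4 * lam * u') <= s ^+ 2 / lam ^+ 2 * (4 * lam * s * u' - 4 * lam * s * u).
Proof.
move=> l0 s1 u0 u1 hu.
have -> : s ^+ 2 / lam ^+ 2 * (4 * lam * s * u' - 4 * lam * s * u) =
   (4 * s ^+ 3 * (u' - u)) / lam by field; apply/negP; lra.
rewrite ler_pdivrMr ?mulr_gt0 //; try lra.
have -> : 4 * s ^+ 3 * (u' - u) / lam * (4 * lam * u') =
   16 * s ^+ 3 * (u' * (u' - u)) by field; apply/negP; lra.
have h1 : 1 <= 2 * (u' * (u' - u)) by nra.
have h2 : s <= s ^+ 3 by nra.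
nra.
Qed.

Lemma step_alg {R : realType} (eta e D D' lam dd : R) : 0 < eta ->
  2 * eta * (e + lam * D) <= D - D' + 2 * eta * (dd * eta) ->
  e <= (2 * eta)^-1 * (D - D') - lam * D + dd * eta.
Proof.
move=> e0 h.
have c0 : 0 <= (2 * eta)^-1 by rewrite invr_ge0; lra.
have := ler_wpM2l c0 h.
have -> : (2 * eta)^-1 * (2 * eta * (e + lam * D)) = e + lam * D.
  by field; apply/negP; lra.
have -> : (2 * eta)^-1 * (D - D' + 2 * eta * (dd * eta)) =
   (2 * eta)^-1 * (D - D') + dd * eta by field; apply/negP; lra.
lra.
Qed.

Lemma dotp_sumr {R : realType} {d : nat} (I : finType) (F : I -> 'rV[R]_d) w :
  dotp w (\sum_i F i) = \sum_i dotp w (F i).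
Proof. rewrite dotpC dotp_suml; apply: eq_bigr => i _; exact: dotpC. Qed.

Lemma jensen {R : realType} {d N : nat} (x : 'I_N -> 'rV[R]_d) (y : 'I_N -> R)
  (lam : R) (T : nat) (B : nat -> 'rV[R]_d) : 0 <= lam -> (0 < T)%N ->
  T%:R * svmF x y lam (T%:R^-1 *: \sum_(t < T) B t) <= \sum_(t < T) svmF x y lam (B t).
Proof.
move=> l0 T0; set a := T%:R^-1 *: _.
have H : forall t : 'I_T, svmF x y lam a + dotp (svm_grad x y lam a) (B t - a)
    <= svmF x y lam (B t).
  move=> t; apply: le_trans (subgrad x y lam (B t) a).
  by rewrite lerDl mulr_ge0 // dotp_ge0.
have := @ler_sum _ _ (index_enum (ordinal T)) xpredT _ _ (fun t _ => H t).
rewrite big_split /= -dotp_sumr sumrB !sumr_const !card_ord.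

have -> : \sum_(t < T) B t - a *+ T = 0.
  rewrite /a -scaler_nat scalerA mulfV ?pnatr_eq0 -?lt0n // scale1r subrr //.
by rewrite dotp0r addr0 mulr_natl.
Qed.

Theorem theorem6 (R : realType) (d N : nat) (x : 'I_N -> 'rV[R]_d)
  (y : 'I_N -> R) (lam : R) (proj : 'rV[R]_d -> 'rV[R]_d)
  (bstar : 'rV[R]_d) (T : nat) :
  (0 < N)%N ->
  (forall i j, `|x i 0 j| <= 1) ->
  (forall i, y i = 1 \/ y i = -1) ->
  0 < lam ->
  (forall b, svmF x y lam bstar <= svmF x y lam b) ->
  is_ball_projection (Num.sqrt d%:R / (2 * lam)) proj ->
  (0 < T)%N ->
  svmF x y lam (pgd_avg x y lam proj T) - svmF x y lam bstar
    <= 4 * d%:R * Num.sqrt d%:R / (lam * Num.sqrt T%:R).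
Proof.
move=> N0 Hx Hy l0 Hopt Hp T0.
have [d0|dpos] := posnP d.
  subst d.
  have -> : pgd_avg x y lam proj T = bstar by apply/rowP => -[j hj].
  by rewrite subrr !mulr0 !mul0r.
set s := Num.sqrt d%:R.
have s1 : 1 <= s.
  have h1 : (1 : R) <= d%:R by rewrite ler1n.
  have h2 : s ^+ 2 = d%:R by rewrite /s sqr_sqrtr ?ler0n.
  have h3 : 0 <= s by exact: sqrtr_ge0.
  nra.
set r := s / (2 * lam).
have r0 : 0 <= r by rewrite /r divr_ge0 ?sqrtr_ge0 // ltW // mulr_gt0.
set B := pgd_iter x y lam proj.
have HB : forall t, in_ball r (B t).
  case=> [|t]; last by case: (Hp (B t - svm_eta d lam t.+1 *: svm_grad x y lam (B t))).
  by rewrite /in_ball /B /= /norm2 dotp0l sqrtr0.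
have Hbs : in_ball r bstar by exact: bstar_ball N0 Hx Hy l0 Hopt.
have HBsq : forall t, dotp (B t) (B t) <= r ^+ 2.
  by move=> t; exact: (ball_sq r (B t) r0).1 (HB t).
have Hbssq : dotp bstar bstar <= r ^+ 2 by exact: (ball_sq r bstar r0).1 Hbs.
set D := fun t => dotp (B t - bstar) (B t - bstar).
set e := fun t => svmF x y lam (B t) - svmF x y lam bstar.
set c := fun t => (2 * svm_eta d lam t)^-1.
set q := fun t => 2 * d%:R * svm_eta d lam t.
set K := 4 * r ^+ 2.
have Hstep : forall t, e t <= c t.+1 * (D t - D t.+1) - lam * D t + q t.+1.
  move=> t.
  set eta := svm_eta d lam t.+1.
  set g := svm_grad x y lam (B t).
  have eta0 : 0 < eta.
    rewrite /eta eta_form // invr_gt0 !mulr_gt0 // sqrtr_gt0 ltr0n //.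
  have h1 : D t.+1 <= dotp ((B t - bstar) - eta *: g) ((B t - bstar) - eta *: g).
    have -> : (B t - bstar) - eta *: g = (B t - eta *: g) - bstar by rewrite addrAC.
    exact: proj_nonexp r proj _ bstar r0 Hp Hbs.
  rewrite dotp_subZ in h1.
  have h2 := subgrad x y lam bstar (B t).
  have E : bstar - B t = - (B t - bstar) by rewrite opprB.
  rewrite E !dotpNr !dotpNl opprK -/g in h2.
  have hD : D t = dotp (B t - bstar) (B t - bstar) by [].
  have hD' : D t.+1 = dotp (B t.+1 - bstar) (B t.+1 - bstar) by [].
  rewrite -hD in h1 h2.
  have h3 : dotp g g <= 4 * d%:R by exact: grad_bound N0 Hx Hy l0 (HB t).
  have h4 : eta ^+ 2 * dotp g g <= eta ^+ 2 * (4 * d%:R).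
    by apply: ler_wpM2l => //; rewrite sqr_ge0.
  rewrite /c /q /e -/eta.
  apply: step_alg => //.
  rewrite (dotpC _ g) in h1.
  have : 0 <= eta * (svmF x y lam bstar - svmF x y lam (B t) + dotp g (B t - bstar) - lam * D t).
    apply: mulr_ge0; lra.
  nra.
have HD : forall t, 0 <= D t <= K.
  move=> t; rewrite dotp_ge0 /=; apply: le_trans (dotp_sub_le _ _) _.
  have := HBsq t; rewrite /K; lra.
have HD0 : 4 * D 0%N <= K.
  rewrite /D /B /= sub0r dotpNl dotpNr opprK /K; lra.
have hs2 : d%:R = s ^+ 2 by rewrite /s sqr_sqrtr ?ler0n.
have s0 : 0 < s by lra.
have sqt1 : forall t, (0 < t)%N -> 1 <= Num.sqrt t%:R :> R.
  move=> t t0.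
  have h1 : (1 : R) <= t%:R by rewrite ler1n.
  have h2 : Num.sqrt t%:R ^+ 2 = t%:R :> R by rewrite sqr_sqrtr ?ler0n.
  have h3 : 0 <= Num.sqrt t%:R :> R by exact: sqrtr_ge0.
  nra.
have Hc : forall t, (0 < t)%N -> c t = 4 * lam * s * Num.sqrt t%:R.
  move=> t t0; rewrite /c eta_form // -/s num_c //.
  by have := sqt1 t t0; lra.
have Hqf : forall t, (0 < t)%N -> q t = s / (4 * lam * Num.sqrt t%:R).
  move=> t t0; rewrite /q eta_form // -/s hs2 num_q //.
  by have := sqt1 t t0; lra.
have HK : K = s ^+ 2 / lam ^+ 2 by rewrite /K /r num_K.
have Hq1 : 4 * q 1%N <= 3 * K * c 1%N.
  by rewrite Hqf // Hc // HK sqrtr1; apply: num1.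
have c1 : 0 <= c 1%N by rewrite Hc // sqrtr1 mulr1; apply: mulr_ge0; lra.
have Hq : forall n, (0 < n)%N -> q n.+1 <= K * lam /\ q n.+1 <= K * (c n.+1 - c n).
  move=> n n0; rewrite Hqf // HK !Hc //; split.
    by apply: num2 => //; apply: sqt1.
  apply: num3 => //; first exact: sqrtr_ge0.
    exact: sqt1.
  by rewrite !sqr_sqrtr ?ler0n // -natr1.
have Hpot := @potential R e D c q K lam Hstep HD HD0 (ltW l0) Hq1 c1 Hq T.-1.
rewrite prednK // in Hpot.
have HJ := jensen x y lam T B (ltW l0) T0.
rewrite -/(pgd_avg x y lam proj T) in HJ.
set Fa := svmF x y lam (pgd_avg x y lam proj T) in HJ *.
set Fs := svmF x y lam bstar in Hpot *.
have Hsum : \sum_(t < T) e t = \sum_(t < T) svmF x y lam (B t) - T%:R * Fs.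
  by rewrite /e sumrB sumr_const card_ord mulr_natl.
rewrite Hsum in Hpot.
have cT : 0 <= c T * D T by rewrite mulr_ge0 // ?dotp_ge0 // Hc // !mulr_ge0 ?sqrtr_ge0 //; lra.
rewrite Hc // HK in Hpot.
set u := Num.sqrt T%:R in Hpot *.
have u1 : 1 <= u by exact: sqt1.
have hu : T%:R = u ^+ 2 by rewrite /u sqr_sqrtr ?ler0n.
have H : u ^+ 2 * (Fa - Fs) <= s ^+ 2 / lam ^+ 2 * (4 * lam * s * u).
  rewrite -hu.
  have : 0 <= 4 * lam * s * u * D T.
    by rewrite mulr_ge0 ?dotp_ge0 // !mulr_ge0 //; lra.
  lra.
have lu : 0 <= lam / u by rewrite divr_ge0 //; lra.
have := ler_wpM2l lu H.
have -> : lam / u * (u ^+ 2 * (Fa - Fs)) = (Fa - Fs) * (lam * u).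
  by field; apply/negP; lra.
have -> : lam / u * (s ^+ 2 / lam ^+ 2 * (4 * lam * s * u)) = 4 * s ^+ 3.
  by field; apply/andP; split; apply/negP; lra.
move=> H2.
rewrite ler_pdivlMr ?mulr_gt0 //; last by lra.
by rewrite hs2; apply: (le_trans H2); rewrite -mulrA -exprSr.
Qed.
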